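(* Let $H$ and $G$ be real Hilbert spaces and let $Z$ be a nonempty closed convex subset of $H\times G$. Let $x_0\in H\times G$, let $\{\lambda_n\}_{n\in\mathbb{N}}\subset(0,1]$, and let $\{H_n\}_{n\in\mathbb{N}}$ be closed convex subsets of $H\times G$ with $Z\subset H_n$ for all $n$. Consider any sequence generated as follows: for $n=0,1,\dots$, $$x_{n+1/2}=x_n+\lambda_n\big(P_{H_n}(x_n)-x_n\big),$$ choose a closed convex set $C_n$ with $Z\subset C_n\subset H(x_n,x_{n+1/2})$, and set $$x_{n+1}=P_{H(x_0,x_n)\cap C_n}(x_0).$$ Then: 1. $Z\subset H(x_0,x_n)\cap C_n$ for all $n\in\mathbb{N}$; 2. $\|x_{n+1}-x_0\|\ge\|x_n-x_0\|$ for all $n\in\mathbb{N}$; 3. $\sum_{n=0}^{\infty}\|x_{n+1}-x_n\|^2<+\infty$; 4. $\sum_{n=0}^{\infty}\|x_{n+1/2}-x_n\|^2<+\infty$; 5. if for every $x\in H\times G$ and every subsequence $\{x_{k_n}\}$ with $x_{k_n}\rightharpoonup x$ (weakly) one has $x\in Z$, then $x_n\to P_Z(x_0)$ strongly.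
   Context: $H\times G$ carries the product Hilbert structure. For $x,y\in H\times G$, $H(x,y):=\{h\in H\times G:\ \langle h-y\mid x-y\rangle\le 0\}$ (so $H(x,x)$ is the whole space). $P_D$ denotes the metric projection onto a nonempty closed convex set $D$. *)

(* Defs.v *)
From mathcomp Require Import all_boot all_order all_algebra.
From mathcomp Require Import all_classical all_reals all_analysis.
Set Implicit Arguments. Unset Strict Implicit. Unset Printing Implicit Defensive.
Import Order.TTheory GRing.Theory Num.Theory.
Import numFieldNormedType.Exports.
Local Open Scope classical_set_scope.
Local Open Scope ring_scope.

Definition is_inner_product (R : realType) (V : lmodType R) (ip : V -> V -> R) :=
  [/\ (forall x y, ip x y = ip y x),
      (forall (a : R) x y z, ip (a *: x + y) z = a * ip x z + ip y z),
      (forall x, 0 <= ip x x) &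
      (forall x, ip x x = 0 -> x = 0)].

Definition ipnorm (R : realType) (V : lmodType R) (ip : V -> V -> R) (x : V) : R :=
  Num.sqrt (ip x x).

Definition strong_cvg (R : realType) (V : lmodType R) (ip : V -> V -> R)
  (u : nat -> V) (l : V) : Prop :=
  (fun n => ipnorm ip (u n - l)) @ \oo --> (0 : R).

Definition weak_cvg (R : realType) (V : lmodType R) (ip : V -> V -> R)
  (u : nat -> V) (l : V) : Prop :=
  forall y : V, (fun n => ip (u n) y) @ \oo --> ip l y.

Definition ip_cauchy (R : realType) (V : lmodType R) (ip : V -> V -> R)
  (u : nat -> V) : Prop :=
  forall e : R, 0 < e -> exists N : nat, forall m n : nat, (N <= m)%N -> (N <= n)%N ->
    ipnorm ip (u m - u n) < e.

Definition is_hilbert (R : realType) (V : lmodType R) (ip : V -> V -> R) : Prop :=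
  is_inner_product ip /\
  forall u : nat -> V, ip_cauchy ip u -> exists l : V, strong_cvg ip u l.

Definition prod_ip (R : realType) (H G : lmodType R)
  (ipH : H -> H -> R) (ipG : G -> G -> R) (x y : (H * G)%type) : R :=
  ipH x.1 y.1 + ipG x.2 y.2.

(* closed (for the norm topology, equivalently sequentially closed) *)
Definition ip_closed (R : realType) (V : lmodType R) (ip : V -> V -> R)
  (D : set V) : Prop :=
  forall (u : nat -> V) (l : V), (forall n, D (u n)) -> strong_cvg ip u l -> D l.

Definition halfsp (R : realType) (V : lmodType R) (ip : V -> V -> R)
  (x y : V) : set V :=
  [set h | ip (h - y) (x - y) <= 0].

Definition is_proj (R : realType) (V : lmodType R) (ip : V -> V -> R)
  (D : set V) (x p : V) : Prop :=
  D p /\ forall z, D z -> ipnorm ip (x - p) <= ipnorm ip (x - z).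

(* metric projection P_D x (the nearest point of D to x, which exists and is
   unique when D is nonempty closed convex in a Hilbert space; defaults to x
   if no nearest point exists) *)
Definition metric_proj (R : realType) (V : lmodType R) (ip : V -> V -> R)
  (D : set V) (x : V) : V :=
  xget x (is_proj ip D x).

(* Main.v *)
Require Import Defs.
Set Warnings "-all".
From mathcomp Require Import all_boot all_order all_algebra.
From mathcomp Require Import all_classical all_reals all_analysis.
From mathcomp Require Import ring lra.
Import Order.TTheory GRing.Theory Num.Theory.
Import numFieldNormedType.Exports.
Local Open Scope classical_set_scope.
Local Open Scope ring_scope.
Section Reals.
Context {R : realType}.

Lemma ecvgP (u : nat -> R) (l : R) : u @ \oo --> l <->
  forall e, 0 < e -> exists N, forall n, (N <= n)%N -> `|u n - l| < e.
Proof.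
split.
  move/cvgrPdist_lt => H e e0; have [N _ HN] := H e e0.
  by exists N => n Nn; rewrite distrC; apply: HN.
move=> H; apply/cvgrPdist_lt => e e0; have [N HN] := H e e0.
by exists N => // n /= Nn; rewrite distrC; apply: HN.
Qed.

Lemma rcauchy_cvg (a : nat -> R) :
  (forall e, 0 < e -> exists N, forall m n, (N <= m)%N -> (N <= n)%N -> `|a m - a n| < e) ->
  exists l : R, a @ \oo --> l.
Proof.
move=> H.
have : cvgn a.
  apply: cauchy_cvg; apply: cauchy_exP => e e0.
  have [N HN] := H e e0; exists (a N); exists N => // n /= Nn.
  by apply: HN.
by move=> c; exists (limn a).
Qed.

Lemma bw (a : nat -> R) M : (forall n, `|a n| <= M) ->
  exists f : nat -> nat, (forall n, (f n < f n.+1)%N) /\ exists l : R, (a \o f) @ \oo --> l.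
Proof.
move=> aM.
have := @segment_compact R (- M) M (a @ \oo) _.
case.
  exists 0%N => // n _ /=; rewrite in_itv /= -ler_norml; exact: aM.
move=> l [_ cl].
have [f fi fl] := (cluster_eventually_cvg a l).1 cl.
exists f; split; last by exists l.
move=> n; have := fi n.+1 n; rewrite leEnat ltnn => h; by rewrite ltnNge h.
Qed.

Lemma incr_mono (f : nat -> nat) : (forall n, (f n < f n.+1)%N) ->
  forall m n, (m < n)%N -> (f m < f n)%N.
Proof.
move=> fi m n; elim: n => // n IH; rewrite ltnS leq_eqVlt => /orP [/eqP ->|/IH h].
  exact: fi.
exact: ltn_trans h (fi n).
Qed.

Lemma incr_mono_le (f : nat -> nat) : (forall n, (f n < f n.+1)%N) ->
  forall m n, (m <= n)%N -> (f m <= f n)%N.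
Proof.
move=> fi m n; rewrite leq_eqVlt => /orP [/eqP ->//|h].
exact/ltnW/incr_mono.
Qed.

Lemma incr_ge (f : nat -> nat) : (forall n, (f n < f n.+1)%N) -> forall n, (n <= f n)%N.
Proof. move=> fi; elim=> // n IH; exact: leq_ltn_trans IH (fi n). Qed.

Lemma ecvg_sub (a : nat -> R) (l : R) (j : nat -> nat) : (forall n, (n <= j n)%N) ->
  a @ \oo --> l -> (a \o j) @ \oo --> l.
Proof.
move=> hj /ecvgP H; apply/ecvgP => e e0; have [N HN] := H e e0.
by exists N => n Nn; apply: HN; exact: leq_trans Nn (hj n).
Qed.

Lemma cvg_rcauchy (a : nat -> R) (l : R) : a @ \oo --> l ->
  forall e, 0 < e -> exists N, forall m n, (N <= m)%N -> (N <= n)%N -> `|a m - a n| < e.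
Proof.
move/ecvgP => H e e0; have [N HN] := H (e / 2) (divr_gt0 e0 (ltr0n _ 2)).
exists N => m n Nm Nn.
have h1 := HN m Nm; have h2 := HN n Nn.
rewrite (_ : a m - a n = (a m - l) - (a n - l)); last by ring.
apply: (le_lt_trans (ler_normB _ _)); lra.
Qed.

Lemma harm_small (e : R) : 0 < e -> exists N, forall n, (N <= n)%N -> n.+1%:R^-1 < e.
Proof.
move=> e0; exists (Num.bound e^-1) => n Nn.
have ei : 0 <= e^-1 by rewrite invr_ge0 ltW.
have h := archi_boundP ei.
rewrite invf_plt ?posrE ?ltr0n //.
apply: (lt_le_trans h); rewrite ler_nat; exact: leqW.
Qed.

Lemma ecvg_unique (a : nat -> R) (L1 L2 : R) : a @ \oo --> L1 -> a @ \oo --> L2 -> L1 = L2.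
Proof.
move=> h1 h2.
by rewrite -(cvg_lim (@Rhausdorff R) h1) -(cvg_lim (@Rhausdorff R) h2).
Qed.

Lemma ecvg_lin (c : R) (a b : nat -> R) (La Lb : R) : a @ \oo --> La -> b @ \oo --> Lb ->
  (fun n => c * a n + b n) @ \oo --> c * La + Lb.
Proof.
move=> /ecvgP ha /ecvgP hb; apply/ecvgP => e e0.
have c1 : 0 < `|c| + 1 by have := normr_ge0 c; lra.
have e1 : 0 < e / (2 * (`|c| + 1)) by rewrite divr_gt0 // mulr_gt0.
have e2 : 0 < e / 2 by rewrite divr_gt0.
have [N1 H1] := ha _ e1; have [N2 H2] := hb _ e2.
exists (maxn N1 N2) => n Nn.
have h1 := H1 n (leq_trans (leq_maxl _ _) Nn).
have h2 := H2 n (leq_trans (leq_maxr _ _) Nn).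
rewrite (_ : c * a n + b n - (c * La + Lb) = c * (a n - La) + (b n - Lb)); last by ring.
apply: (le_lt_trans (ler_normD _ _)); rewrite normrM.
have : `|c| * `|a n - La| <= `|c| * (e / (2 * (`|c| + 1))).
  by rewrite ler_wpM2l // ltW.
have : `|c| * (e / (2 * (`|c| + 1))) <= e / 2.
  rewrite mulrA ler_pdivrMr ?mulr_gt0 //.
  have := normr_ge0 c; nra.
lra.
Qed.

Lemma ecvg_bound (a : nat -> R) (L C : R) : a @ \oo --> L -> (forall n, `|a n| <= C) -> `|L| <= C.
Proof.
move=> /ecvgP ha hC; apply/ler_addgt0Pr => e e0.
have [N HN] := ha e e0; have h := HN N (leqnn N).
have := hC N; have := ler_normB (a N) (a N - L).
rewrite (_ : a N - (a N - L) = L); last by ring.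
lra.
Qed.

Lemma ecvg_ext (a b : nat -> R) (L : R) : (forall n, a n = b n) -> a @ \oo --> L -> b @ \oo --> L.
Proof. by move=> h; have -> : b = a by apply/funext => n; rewrite h. Qed.

Fixpoint dseq (sel : (nat -> R) -> nat -> nat) (b : nat -> nat -> R) (m : nat) : nat -> nat :=
  match m with
  | 0 => sel (b 0%N)
  | m'.+1 => dseq sel b m' \o sel (fun n => b m (dseq sel b m' n))
  end.

Lemma diagonal (b : nat -> nat -> R) M : (forall m n, `|b m n| <= M) ->
  exists d : nat -> nat, (forall n, (d n < d n.+1)%N) /\
    forall m, exists l : R, (fun n => b m (d n)) @ \oo --> l.
Proof.
move=> bM.
have hsel : forall a : nat -> R, exists g : nat -> nat, (forall n, `|a n| <= M) ->
    (forall n, (g n < g n.+1)%N) /\ exists l : R, (a \o g) @ \oo --> l.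
  move=> a; case: (pselect (forall n, `|a n| <= M)) => h.
    by have [g hg] := bw a M h; exists g.
  by exists id.
have [sel hs] := choice hsel.
pose s := dseq sel b.
have sS m : s m.+1 = s m \o sel (fun n => b m.+1 (s m n)) by [].
have s0 : s 0%N = sel (b 0%N) by [].
have inc : forall m n, (s m n < s m n.+1)%N.
  elim=> [|m IH] n; first by rewrite s0; exact: ((hs (b 0%N)) (bM 0%N)).1.
  rewrite sS /=; apply: incr_mono => //.
  exact: ((hs (fun n => b m.+1 (s m n))) (fun n => bM _ _)).1.
have cv : forall m, exists l : R, (fun n => b m (s m n)) @ \oo --> l.
  case=> [|m]; first by rewrite s0; exact: ((hs (b 0%N)) (bM 0%N)).2.
  rewrite sS; exact: ((hs (fun n => b m.+1 (s m n))) (fun n => bM _ _)).2.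
have tail : forall m k n, exists j, (n <= j)%N /\ s (k + m)%N n = s m j.
  move=> m; elim=> [|k IH] n; first by exists n.
  rewrite addSn sS /=.
  set g := sel _.
  have [j [hj ->]] := IH (g n).
  exists j; split => //; apply: leq_trans hj.
  apply: incr_ge; exact: ((hs (fun n => b (k + m).+1 (s (k + m)%N n))) (fun n => bM _ _)).1.
exists (fun n => s n n); split.
  move=> n; rewrite sS /=.
  apply: incr_mono => //.
  have := incr_ge _ ((hs (fun n0 => b n.+1 (s n n0))) (fun n => bM _ _)).1 n.+1.
  by [].
move=> m; have [l hl] := cv m; exists l.
apply/ecvgP => e e0; have [N HN] := (ecvgP _ _).1 hl e e0.
exists (maxn N m) => n Nn.
have mn : (m <= n)%N := leq_trans (leq_maxr _ _) Nn.
have [j [hj ->]] : exists j, (n <= j)%N /\ s n n = s m j.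
  by have := tail m (n - m)%N n; rewrite subnK.
apply: HN; apply: leq_trans hj; exact: leq_trans (leq_maxl _ _) Nn.
Qed.

Lemma series_fin (f : nat -> R) (B : R) : (forall n, 0 <= f n) ->
  (forall N, \sum_(0 <= i < N) f i <= B) -> (\sum_(0 <= n <oo) (f n)%:E < +oo)%E.
Proof.
move=> f0 fB; apply: (@le_lt_trans _ _ B%:E); last exact: ltry.
apply: lime_le.
  by apply: is_cvg_nneseries => n _ _; rewrite lee_fin.
by apply: nearW => N; rewrite sumEFin lee_fin.
Qed.

End Reals.
Arguments ecvg_ext {R a b L}.
Arguments ecvg_lin {R} c {a b La Lb}.
Arguments ecvg_unique {R a L1 L2}.
Arguments ecvg_bound {R a L C}.

Section Hilbert.
Context {R : realType} {V : lmodType R} (ip : V -> V -> R).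
Hypothesis hip : is_inner_product ip.

Local Notation nsq x := (ip x x).

Lemma ipC x y : ip x y = ip y x.
Proof. by case: hip. Qed.
Lemma ipDZl a x y z : ip (a *: x + y) z = a * ip x z + ip y z.
Proof. by case: hip. Qed.
Lemma nsq_ge0 x : 0 <= nsq x.
Proof. by case: hip. Qed.
Lemma nsq_eq0 x : nsq x = 0 -> x = 0.
Proof. by case: hip => _ _ _; apply. Qed.

Lemma ip0l z : ip 0 z = 0.
Proof.
have := ipDZl 1 0 0 z; rewrite scale1r addr0 mul1r => h; lra.
Qed.
Lemma ipDl x y z : ip (x + y) z = ip x z + ip y z.
Proof. by rewrite -{1}(scale1r x) ipDZl mul1r. Qed.
Lemma ipZl a x z : ip (a *: x) z = a * ip x z.
Proof. by rewrite -(addr0 (a *: x)) ipDZl ip0l addr0. Qed.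
Lemma ipNl x z : ip (- x) z = - ip x z.
Proof. by rewrite -scaleN1r ipZl mulN1r. Qed.
Lemma ipBl x y z : ip (x - y) z = ip x z - ip y z.
Proof. by rewrite ipDl ipNl. Qed.
Lemma ip0r z : ip z 0 = 0.
Proof. by rewrite ipC ip0l. Qed.
Lemma ipDr x y z : ip z (x + y) = ip z x + ip z y.
Proof. by rewrite ipC ipDl !(ipC z). Qed.
Lemma ipZr a x z : ip z (a *: x) = a * ip z x.
Proof. by rewrite ipC ipZl ipC. Qed.
Lemma ipNr x z : ip z (- x) = - ip z x.
Proof. by rewrite ipC ipNl ipC. Qed.
Lemma ipBr x y z : ip z (x - y) = ip z x - ip z y.
Proof. by rewrite ipDr ipNr. Qed.

Lemma nsqD x y : nsq (x + y) = nsq x + 2 * ip x y + nsq y.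
Proof. rewrite ipDl !ipDr (ipC y x); lra. Qed.
Lemma nsqB x y : nsq (x - y) = nsq x - 2 * ip x y + nsq y.
Proof. rewrite ipBl !ipBr (ipC y x); lra. Qed.
Lemma nsqZ a x : nsq (a *: x) = a ^+ 2 * nsq x.
Proof. by rewrite ipZl ipZr mulrA expr2. Qed.
Lemma nsqBZ x a y : nsq (x - a *: y) = nsq x - 2 * a * ip x y + a ^+ 2 * nsq y.
Proof. rewrite nsqB nsqZ ipZr; lra. Qed.
Lemma nsqN x : nsq (- x) = nsq x.
Proof. by rewrite ipNl ipNr opprK. Qed.
Lemma nsqC x y : nsq (x - y) = nsq (y - x).
Proof. by rewrite -nsqN opprB. Qed.

Lemma CS x y : ip x y ^+ 2 <= nsq x * nsq y.
Proof.
have [y0|yn0] := eqVneq (nsq y) 0.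
  by rewrite y0 (nsq_eq0 _ y0) ip0r expr0n mulr0.
have yp : 0 < nsq y by rewrite lt_neqAle eq_sym yn0 nsq_ge0.
have := nsq_ge0 (x - (ip x y / nsq y) *: y); rewrite nsqBZ.
set c := nsq y; set b := ip x y; set a := nsq x => h.
have e : a - 2 * (b / c) * b + (b / c) ^+ 2 * c = a - b ^+ 2 / c.
  by field; rewrite /c.
by rewrite e subr_ge0 ler_pdivrMr // mulrC in h.
Qed.

Lemma ipnorm_ge0 x : 0 <= ipnorm ip x.
Proof. exact: sqrtr_ge0. Qed.
Lemma ipnorm_sq x : ipnorm ip x ^+ 2 = nsq x.
Proof. by rewrite /ipnorm sqr_sqrtr // nsq_ge0. Qed.

Lemma CSabs x y : `|ip x y| <= ipnorm ip x * ipnorm ip y.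
Proof.
rewrite -sqrtr_sqr /ipnorm -sqrtrM ?nsq_ge0 // ler_sqrt ?CS //.
by rewrite mulr_ge0 // nsq_ge0.
Qed.

Lemma young x y e : 0 < e -> 2 * ip x y <= e * nsq x + e^-1 * nsq y.
Proof.
move=> e0; have := nsq_ge0 (x - e^-1 *: y); rewrite nsqBZ.
have ei : 0 < e^-1 by rewrite invr_gt0.
move=> h.
have : 0 <= e * (nsq x - 2 * e^-1 * ip x y + e^-1 ^+ 2 * nsq y) by rewrite mulr_ge0 // ltW.
have -> : e * (nsq x - 2 * e^-1 * ip x y + e^-1 ^+ 2 * nsq y) =
   e * nsq x - 2 * ip x y + e^-1 * nsq y by field; rewrite gt_eqF.
lra.
Qed.


Lemma strong_cvgP u l : strong_cvg ip u l <->
  forall e, 0 < e -> exists N, forall n, (N <= n)%N -> nsq (u n - l) < e.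
Proof.
rewrite /strong_cvg ecvgP; split => H e e0.
  have se : 0 < Num.sqrt e by rewrite sqrtr_gt0.
  have [N HN] := H (Num.sqrt e) se.
  exists N => n Nn; have := HN n Nn.
  by rewrite subr0 ger0_norm ?ipnorm_ge0 // /ipnorm ltr_sqrt.
have [N HN] := H (e ^+ 2) (exprn_gt0 _ e0).
exists N => n Nn; have := HN n Nn.
rewrite subr0 ger0_norm ?ipnorm_ge0 // /ipnorm => h.
by rewrite -(ger0_norm (ltW e0)) -sqrtr_sqr ltr_sqrt // exprn_gt0.
Qed.

Lemma ip_cauchyP u : ip_cauchy ip u <->
  forall e, 0 < e -> exists N, forall m n, (N <= m)%N -> (N <= n)%N -> nsq (u m - u n) < e.
Proof.
rewrite /ip_cauchy; split => H e e0.
  have se : 0 < Num.sqrt e by rewrite sqrtr_gt0.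
  have [N HN] := H (Num.sqrt e) se.
  exists N => m n Nm Nn; have := HN m n Nm Nn.
  by rewrite /ipnorm ltr_sqrt.
have [N HN] := H (e ^+ 2) (exprn_gt0 _ e0).
exists N => m n Nm Nn; have := HN m n Nm Nn.
rewrite /ipnorm => h.
by rewrite -(ger0_norm (ltW e0)) -sqrtr_sqr ltr_sqrt // exprn_gt0.
Qed.


Definition cvx (D : set V) := forall a b t, D a -> D b -> 0 <= t -> t <= 1 ->
  D (t *: a + (1 - t) *: b).

Lemma conv_eq t (a b : V) : t *: a + (1 - t) *: b = b + t *: (a - b).
Proof. by rewrite scalerBl scale1r scalerBr addrCA. Qed.

Lemma proj_VI D x p : cvx D -> D p ->
  (forall z, D z -> nsq (x - p) <= nsq (x - z)) ->
  forall z, D z -> ip (x - p) (z - p) <= 0.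
Proof.
move=> cD Dp pm z Dz; rewrite leNgt; apply/negP => c0.
set c := ip (x - p) (z - p) in c0 *.
have d0 : 0 <= nsq (z - p) := nsq_ge0 _.
set d := nsq (z - p) in d0 *.
have cd : 0 < c + d by lra.
set t := c / (c + d).
have t0 : 0 < t by rewrite divr_gt0.
have t1 : t <= 1 by rewrite ler_pdivrMr // mul1r; lra.
have := pm _ (cD z p t Dz Dp (ltW t0) t1).
rewrite conv_eq (_ : x - (p + t *: (z - p)) = (x - p) - t *: (z - p)); last first.
  by rewrite opprD addrA.
rewrite nsqBZ -/c -/d => h.
have h2 : t * (2 * c) <= t * (t * d).
  rewrite expr2 in h; lra.
rewrite ler_pM2l // in h2.
have h3 : t * d <= c.
  rewrite /t mulrAC ler_pdivrMr //; nra.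
lra.
Qed.

Lemma VI_min D x p : D p -> (forall z, D z -> ip (x - p) (z - p) <= 0) ->
  forall z, D z -> nsq (x - p) <= nsq (x - z).
Proof.
move=> Dp hv z Dz.
have -> : x - z = (x - p) - (z - p) by rewrite opprB addrA subrK.
rewrite [X in _ <= X]nsqB; have := hv z Dz; have := nsq_ge0 (z - p); move=> ? ?; lra.
Qed.

Lemma VI_unique x p q : ip (x - p) (q - p) <= 0 -> ip (x - q) (p - q) <= 0 -> p = q.
Proof.
move=> h1 h2.
have e := nsqB q p.
rewrite !ipBl !ipBr in h1 h2.
rewrite (ipC q p) (ipC x p) (ipC x q) in h1 h2 e.
have : nsq (q - p) <= 0 by lra.
move=> h; have := nsq_ge0 (q - p) => h'.
have /nsq_eq0 /eqP : nsq (q - p) = 0 by apply/eqP; rewrite eq_le h h'.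
by rewrite subr_eq0 => /eqP.
Qed.


Hypothesis hcomp : forall u, ip_cauchy ip u -> exists l, strong_cvg ip u l.

Lemma parallelogram a b : nsq (b - a) + nsq (a + b) = 2 * nsq a + 2 * nsq b.
Proof. rewrite nsqB nsqD (ipC b a); lra. Qed.

Lemma proj_exists D x : D !=set0 -> ip_closed ip D -> cvx D ->
  exists p, D p /\ forall z, D z -> nsq (x - p) <= nsq (x - z).
Proof.
move=> [z0 Dz0] clD cD.
pose S := [set r | exists z, D z /\ r = nsq (x - z)].
have S0 : S !=set0 by exists (nsq (x - z0)); exists z0.
have Slb : has_lbound S by exists 0 => r [z [_ ->]]; exact: nsq_ge0.
have dle : forall z, D z -> inf S <= nsq (x - z).
  by move=> z Dz; apply: (ge_inf Slb); exists z.
have d0 : 0 <= inf S by apply: lb_le_inf S0 _ => r [z [_ ->]]; exact: nsq_ge0.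
set d := inf S in dle d0.
have : forall n : nat, exists z, D z /\ nsq (x - z) < d + n.+1%:R^-1.
  move=> n; have np : 0 < n.+1%:R^-1 :> R by rewrite invr_gt0 ltr0n.
  have [r [z [Dz ->]] rlt] := inf_adherent np (conj S0 Slb).
  by exists z.
move/choice => [zs hz].
have zc : ip_cauchy ip zs.
  apply/ip_cauchyP => e e0.
  have e4 : 0 < e / 4 by rewrite divr_gt0.
  have [N HN] := harm_small _ e4.
  exists N => m n Nm Nn.
  have hm := HN m Nm; have hn := HN n Nn.
  have [Dm hdm] := hz m; have [Dn hdn] := hz n.
  pose h : R := 2^-1.
  have h1 : 1 - h = h by rewrite /h; field.
  have hge0 : 0 <= h by rewrite /h; lra.
  have hle1 : h <= 1 by rewrite /h; lra.
  have Dmid := cD _ _ h Dm Dn hge0 hle1.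
  have := dle _ Dmid.
  rewrite h1 (_ : x - (h *: zs m + h *: zs n) = h *: ((x - zs m) + (x - zs n))); last first.
    rewrite scalerDr !scalerBr addrACA -scalerDl (_ : h + h = 1) ?scale1r ?opprD //.
    by rewrite /h; field.
  rewrite nsqZ => hmid.
  have := parallelogram (x - zs m) (x - zs n).
  rewrite (_ : x - zs n - (x - zs m) = zs m - zs n); last first.
    by rewrite opprB addrC addrA subrK.
  have hh : h ^+ 2 = 4^-1 by rewrite /h; field.
  rewrite hh in hmid.
  move=> hp.
  set am := m.+1%:R^-1 in hm hdm; set an := n.+1%:R^-1 in hn hdn.
  lra.
have [p hp] := hcomp _ zc.
have Dp : D p by apply: (clD zs p) => // n; have [] := hz n.
exists p; split => // z Dz.
apply: (le_trans _ (dle z Dz)).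
apply/ler_addgt0Pr => e e0.
pose eta := e / (2 * (d + 1)).
have eta0 : 0 < eta by rewrite divr_gt0 // mulr_gt0 //; lra.
have etad : eta * d <= e / 2.
  rewrite /eta mulrAC ler_pdivrMr ?mulr_gt0 //; last lra.
  nra.
have ei : 0 < eta^-1 by rewrite invr_gt0.
pose K := 2 + eta + eta^-1.
have K0 : 0 < K by rewrite /K; lra.
pose del := e / (2 * K).
have del0 : 0 < del by rewrite divr_gt0 // mulr_gt0.
have Kdel : K * del = e / 2.
  rewrite /del; field; rewrite gt_eqF //.
rewrite /K in Kdel.
have [N1 HN1] := (strong_cvgP zs p).1 hp del del0.
have [N2 HN2] := harm_small _ del0.
pose n := maxn N1 N2.
have hn1 := HN1 n (leq_maxl _ _).
have hn2 := HN2 n (leq_maxr _ _).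
have [_ hzn] := hz n.
set an := n.+1%:R^-1 in hn2 hzn.
suff : nsq ((x - zs n) + (zs n - p)) <= d + e by rewrite addrA subrK.
rewrite nsqD.
have y := young (x - zs n) (zs n - p) eta eta0.
have A0 := nsq_ge0 (x - zs n).
have hA : (1 + eta) * nsq (x - zs n) <= (1 + eta) * (d + del).
  rewrite ler_pM2l; lra.
have hB : (1 + eta^-1) * nsq (zs n - p) <= (1 + eta^-1) * del.
  rewrite ler_pM2l; lra.
lra.
Qed.


Lemma mproj_spec D x : D !=set0 -> ip_closed ip D -> cvx D ->
  D (metric_proj ip D x) /\
  (forall z, D z -> ip (x - metric_proj ip D x) (z - metric_proj ip D x) <= 0) /\
  (forall z, D z -> nsq (x - metric_proj ip D x) <= nsq (x - z)).
Proof.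
move=> D0 clD cD.
have [p [Dp hp]] := proj_exists D x D0 clD cD.
have ex : exists q, is_proj ip D x q.
  exists p; split => // z Dz; rewrite /ipnorm ler_sqrt ?nsq_ge0 //; exact: hp.
have [Dq hq] := xgetPex x ex.
rewrite /metric_proj.
set q := xget x (is_proj ip D x).
have mq : forall z, D z -> nsq (x - q) <= nsq (x - z).
  by move=> z Dz; have := hq z Dz; rewrite /ipnorm ler_sqrt ?nsq_ge0.
split => //; split => //.
exact: proj_VI.
Qed.

Definition subsp (S : set V) := S 0 /\ forall a u v, S u -> S v -> S (a *: u + v).

Lemma subsp_cvx S : subsp S -> cvx S.
Proof.
move=> [S0 SS] a b t Sa Sb _ _.
apply: (SS) => //; rewrite -(addr0 ((1 - t) *: b)); exact: SS.
Qed.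

Lemma proj_subspace S y : subsp S -> ip_closed ip S ->
  S (metric_proj ip S y) /\ forall w, S w -> ip (y - metric_proj ip S y) w = 0.
Proof.
move=> sS clS.
have S0 : S !=set0 by exists 0; case: sS.
have [SP [VI _]] := mproj_spec S y S0 clS (subsp_cvx S sS).
split => // w Sw.
set P := metric_proj ip S y in SP VI *.
have h1 := VI _ (sS.2 1 w P Sw SP).
have h2 := VI _ (sS.2 (-1) w P Sw SP).
rewrite addrK scale1r in h1; rewrite addrK scaleN1r ipNr in h2.
apply/eqP; rewrite eq_le h1 /=; lra.
Qed.


Lemma weak_compact (u : nat -> V) B : (forall n, nsq (u n) <= B) ->
  exists f : nat -> nat, (forall n, (f n < f n.+1)%N) /\
    exists w, weak_cvg ip (fun n => u (f n)) w.
Proof.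
move=> uB.
have B0 : 0 <= B := le_trans (nsq_ge0 _) (uB 0%N).
pose K := Num.sqrt B.
have K0 : 0 <= K := sqrtr_ge0 _.
have nK : forall n, ipnorm ip (u n) <= K.
  by move=> n; rewrite /ipnorm /K ler_sqrt.
have bnd : forall m n, `|ip (u n) (u m)| <= K * K.
  move=> m n; apply: (le_trans (CSabs _ _)).
  by apply: ler_pM => //; apply: ipnorm_ge0.
have [d [dinc dcv]] := diagonal (fun m n => ip (u n) (u m)) (K * K) bnd.
exists d; split => //.
pose v n := u (d n).
have vip : forall n y, `|ip (v n) y| <= K * ipnorm ip y.
  move=> n y; apply: (le_trans (CSabs _ _)).
  by apply: ler_wpM2r; [apply: ipnorm_ge0 | apply: nK].
pose rc (a : nat -> R) := forall e, 0 < e -> exists N, forall m n,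
  (N <= m)%N -> (N <= n)%N -> `|a m - a n| < e.
pose S := [set y | rc (fun n => ip (v n) y)].
have sS : subsp S.
  split.
    move=> e e0; exists 0%N => m n _ _; by rewrite !ip0r subr0 normr0.
  move=> a y z Sy Sz.
  have [Ly hy] := rcauchy_cvg _ Sy; have [Lz hz] := rcauchy_cvg _ Sz.
  apply: (cvg_rcauchy _ (a * Ly + Lz)).
  apply: (ecvg_ext _ (ecvg_lin a hy hz)) => n /=.
  by rewrite ipDr ipZr.
have clS : ip_closed ip S.
  move=> ys y Sys; rewrite /strong_cvg => /ecvgP hy e e0.
  have K1 : 0 < K + 1 by lra.
  have dl0 : 0 < e / (3 * (K + 1)) by rewrite divr_gt0 // mulr_gt0.
  have [N hN] := hy _ dl0; have yN := hN N (leqnn N).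
  rewrite subr0 ger0_norm ?ipnorm_ge0 // in yN.
  have e3 : 0 < e / 3 by rewrite divr_gt0.
  have [N' hN'] := Sys N (e / 3) e3.
  exists N' => m n hm hn.
  have A := hN' m n hm hn.
  set w := y - ys N.
  have nw : ipnorm ip w = ipnorm ip (ys N - y) by rewrite /ipnorm /w nsqC.
  have -> : ip (v m) y - ip (v n) y =
      (ip (v m) (ys N) - ip (v n) (ys N)) + ip (v m) w - ip (v n) w.
    by rewrite /w !ipBr; ring.
  apply: (le_lt_trans (ler_normB _ _)).
  apply: (le_lt_trans (lerD (ler_normD _ _) (lexx _))).
  have b1 := vip m w; have b2 := vip n w.
  have b3 : K * ipnorm ip w <= K * (e / (3 * (K + 1))).
    by rewrite ler_wpM2l // nw ltW.
  have b4 : K * (e / (3 * (K + 1))) <= e / 3.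
    rewrite mulrA ler_pdivrMr ?mulr_gt0 //; nra.
  lra.
have vS : forall k, S (v k).
  move=> k; have [l hl] := dcv (d k); exact: cvg_rcauchy _ _ hl.
have allS : forall y, S y.
  move=> y; have [SP orth] := proj_subspace S y sS clS.
  set P := metric_proj ip S y in SP orth.
  have ev : forall n, ip (v n) y = ip (v n) P.
    move=> n; have := orth _ (vS n); rewrite ipC ipBr => h; lra.
  move=> e e0; have [N HN] := SP e e0; exists N => m n hm hn; rewrite !ev; exact: HN.
have : forall y, exists l : R, (fun n => ip (v n) y) @ \oo --> l.
  by move=> y; apply: rcauchy_cvg; apply: allS.
move/choice => [f hf].
have flin : forall a y z, f (a *: y + z) = a * f y + f z.
  move=> a y z; apply: (ecvg_unique (hf (a *: y + z))).
  apply: (ecvg_ext _ (ecvg_lin a (hf y) (hf z))) => n /=; by rewrite ipDr ipZr.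
have f0 : f 0 = 0.
  have := flin 1 0 0; rewrite scale1r addr0 mul1r => h; lra.
have fb : forall y, `|f y| <= K * ipnorm ip y.
  move=> y; exact: ecvg_bound (hf y) (fun n => vip n y).
have [w hw] : exists w, forall y, f y = ip w y.
  case: (pselect (forall y, f y = 0)) => [h0|].
    by exists 0 => y; rewrite h0 ip0l.
  move=> /existsNP [y0 fy0].
  pose Ker := [set y | f y = 0].
  have sK : subsp Ker.
    split; first exact: f0.
    by move=> a y z hy hz; rewrite /Ker /= flin hy hz mulr0 addr0.
  have clK : ip_closed ip Ker.
    move=> ys y hys; rewrite /strong_cvg => /ecvgP hy; rewrite /Ker /=.
    apply/eqP; rewrite -normr_le0; apply/ler_addgt0Pr => e e0; rewrite add0r.
    have K1 : 0 < K + 1 by lra.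
    have dl0 : 0 < e / (K + 1) by rewrite divr_gt0.
    have [N hN] := hy _ dl0; have yN := hN N (leqnn N).
    rewrite subr0 ger0_norm ?ipnorm_ge0 // in yN.
    have fe : f y = f (y - ys N).
      have := flin 1 (y - ys N) (ys N); rewrite scale1r subrK mul1r hys; lra.
    have nw : ipnorm ip (y - ys N) = ipnorm ip (ys N - y) by rewrite /ipnorm nsqC.
    rewrite fe; apply: (le_trans (fb _)); rewrite nw.
    have b3 : K * ipnorm ip (ys N - y) <= K * (e / (K + 1)).
      by rewrite ler_wpM2l // ltW.
    have b4 : K * (e / (K + 1)) <= e.
      rewrite mulrA ler_pdivrMr //; nra.
    lra.
  have [Kq orth] := proj_subspace Ker y0 sK clK.
  set q := metric_proj ip Ker y0 in Kq orth.
  rewrite /Ker /= in Kq.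
  have fz : f (y0 - q) = f y0.
    rewrite addrC -scaleN1r flin Kq; ring.
  set z := y0 - q in fz orth.
  have nz : nsq z != 0.
    apply/negP => /eqP h; move: fz; rewrite (nsq_eq0 _ h) f0 => hh.
    by apply: fy0.
  have fz0 : f z != 0 by rewrite fz; apply/eqP.
  exists ((f z / nsq z) *: z) => y.
  have Kk : Ker ((- (f y / f z)) *: z + y).
    rewrite /Ker /= flin; field.
    by [].
  have := orth _ Kk; rewrite ipDr ipZr => h.
  rewrite ipZl.
  have -> : ip z y = f y / f z * nsq z by lra.
  by field; apply/andP.
exists w => y.
have -> : ip w y = f y by rewrite hw.
exact: hf y.
Qed.


Lemma halfsp_closed a b : ip_closed ip (halfsp ip a b).
Proof.
move=> hs h hsH; rewrite /strong_cvg => /ecvgP hh; rewrite /halfsp /=.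
apply/ler_addgt0Pr => e e0; rewrite add0r.
set c := a - b.
have c1 : 0 < ipnorm ip c + 1 by have := ipnorm_ge0 c; lra.
have dl0 : 0 < e / (ipnorm ip c + 1) by rewrite divr_gt0.
have [N hN] := hh _ dl0; have yN := hN N (leqnn N).
rewrite subr0 ger0_norm ?ipnorm_ge0 // in yN.
have hN0 : ip (hs N - b) c <= 0 := hsH N.
have -> : h - b = (hs N - b) + (h - hs N) by rewrite [RHS]addrC addrA subrK.
rewrite ipDl.
have nw : ipnorm ip (h - hs N) = ipnorm ip (hs N - h) by rewrite /ipnorm nsqC.
have b1 : ip (h - hs N) c <= ipnorm ip (h - hs N) * ipnorm ip c.
  exact: le_trans (ler_norm _) (CSabs _ _).
have b2 : ipnorm ip (h - hs N) * ipnorm ip c <= e / (ipnorm ip c + 1) * ipnorm ip c.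
  by rewrite ler_wpM2r ?ipnorm_ge0 // nw ltW.
have b3 : e / (ipnorm ip c + 1) * ipnorm ip c <= e.
  rewrite mulrAC ler_pdivrMr //; have := ipnorm_ge0 c; nra.
lra.
Qed.

Lemma halfsp_cvx a b : cvx (halfsp ip a b).
Proof.
move=> u w t hu hw t0 t1; rewrite /halfsp /= in hu hw *.
have -> : t *: u + (1 - t) *: w - b = t *: (u - b) + (1 - t) *: (w - b).
  by rewrite !scalerBr [RHS]addrACA -opprD -scalerDl (addrC t) subrK scale1r.
rewrite ipDl !ipZl.
have h1 : t * ip (u - b) (a - b) <= 0 by rewrite mulr_ge0_le0.
have h2 : (1 - t) * ip (w - b) (a - b) <= 0 by rewrite mulr_ge0_le0 // subr_ge0.
lra.
Qed.

Lemma closedI A B : ip_closed ip A -> ip_closed ip B -> ip_closed ip (A `&` B).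
Proof.
move=> cA cB us l hus hl; split.
  by apply: (cA us) => // n; case: (hus n).
by apply: (cB us) => // n; case: (hus n).
Qed.

Lemma cvxI A B : cvx A -> cvx B -> cvx (A `&` B).
Proof.
move=> cA cB a b t [Aa Ba] [Ab Bb] t0 t1; split; [exact: cA | exact: cB].
Qed.

Lemma cvx_of_convex (A : set V) : convex_set A -> cvx A.
Proof.
move=> cA a b t Aa Ab t0 t1.
have := cA a b (Itv01 t0 t1); rewrite !inE => /(_ Aa Ab).
by [].
Qed.

End Hilbert.

Section Prod.
Context {R : realType} {H G : lmodType R} (ipH : H -> H -> R) (ipG : G -> G -> R).
Hypotheses (hH : is_hilbert ipH) (hG : is_hilbert ipG).

Lemma prod_inner : is_inner_product (prod_ip ipH ipG).
Proof.
have [hiH _] := hH; have [hiG _] := hG.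
split.
- by move=> x y; rewrite /prod_ip (ipC ipH hiH) (ipC ipG hiG).
- by move=> a x y z; rewrite /prod_ip /= (ipDZl ipH hiH) (ipDZl ipG hiG); ring.
- by move=> x; rewrite /prod_ip addr_ge0 // nsq_ge0.
- move=> [a b]; rewrite /prod_ip /= => h.
  have ha := nsq_ge0 ipH hiH a; have hb := nsq_ge0 ipG hiG b.
  have a0 : ipH a a = 0 by lra.
  have b0 : ipG b b = 0 by lra.
  by rewrite (nsq_eq0 ipH hiH _ a0) (nsq_eq0 ipG hiG _ b0).
Qed.

Lemma prod_complete u : ip_cauchy (prod_ip ipH ipG) u ->
  exists l, strong_cvg (prod_ip ipH ipG) u l.
Proof.
have [hiH cH] := hH; have [hiG cG] := hG.
move=> /ip_cauchyP hu.
have c1 : ip_cauchy ipH (fun n => (u n).1).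
  apply/ip_cauchyP => e e0; have [N HN] := hu e e0; exists N => m n hm hn.
  have := HN m n hm hn; rewrite /prod_ip.
  have -> : (u m - u n).1 = (u m).1 - (u n).1 by [].
  have -> : (u m - u n).2 = (u m).2 - (u n).2 by [].
  have := nsq_ge0 ipG hiG ((u m).2 - (u n).2); move=> ? ?; lra.
have c2 : ip_cauchy ipG (fun n => (u n).2).
  apply/ip_cauchyP => e e0; have [N HN] := hu e e0; exists N => m n hm hn.
  have := HN m n hm hn; rewrite /prod_ip.
  have -> : (u m - u n).1 = (u m).1 - (u n).1 by [].
  have -> : (u m - u n).2 = (u m).2 - (u n).2 by [].
  have := nsq_ge0 ipH hiH ((u m).1 - (u n).1); move=> ? ?; lra.
have [l1 h1] := cH _ c1; have [l2 h2] := cG _ c2.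
exists (l1, l2); apply/strong_cvgP => e e0.
have e2 : 0 < e / 2 by rewrite divr_gt0.
have [N1 H1] := (strong_cvgP _ _ _).1 h1 _ e2.
have [N2 H2] := (strong_cvgP _ _ _).1 h2 _ e2.
exists (maxn N1 N2) => n hn; rewrite /prod_ip.
have -> : (u n - (l1, l2)).1 = (u n).1 - l1 by [].
have -> : (u n - (l1, l2)).2 = (u n).2 - l2 by [].
have := H1 n (leq_trans (leq_maxl _ _) hn).
have := H2 n (leq_trans (leq_maxr _ _) hn).
move=> ? ?; lra.
Qed.

End Prod.

Theorem proposition3 (R : realType) (H G : lmodType R)
  (ipH : H -> H -> R) (ipG : G -> G -> R)
  (hH : is_hilbert ipH) (hG : is_hilbert ipG)
  (Z : set (H * G)%type)
  (Z_ne : Z !=set0) (Z_cl : ip_closed (prod_ip ipH ipG) Z) (Z_cv : convex_set Z)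
  (lam : nat -> R) (lam_rng : forall n, 0 < lam n <= 1)
  (Hn : nat -> set (H * G)%type)
  (Hn_cl : forall n, ip_closed (prod_ip ipH ipG) (Hn n))
  (Hn_cv : forall n, convex_set (Hn n))
  (Z_Hn : forall n, Z `<=` Hn n)
  (x xh : nat -> (H * G)%type) (C : nat -> set (H * G)%type)
  (def_xh : forall n,
     xh n = x n + lam n *: (metric_proj (prod_ip ipH ipG) (Hn n) (x n) - x n))
  (C_cl : forall n, ip_closed (prod_ip ipH ipG) (C n))
  (C_cv : forall n, convex_set (C n))
  (Z_C : forall n, Z `<=` C n)
  (C_H : forall n, C n `<=` halfsp (prod_ip ipH ipG) (x n) (xh n))
  (def_x : forall n,
     x n.+1 = metric_proj (prod_ip ipH ipG)
                (halfsp (prod_ip ipH ipG) (x 0%N) (x n) `&` C n) (x 0%N)) :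
  [/\ (forall n, Z `<=` halfsp (prod_ip ipH ipG) (x 0%N) (x n) `&` C n),
      (forall n, ipnorm (prod_ip ipH ipG) (x n.+1 - x 0%N)
                 >= ipnorm (prod_ip ipH ipG) (x n - x 0%N)),
      (\sum_(0 <= n <oo) ((ipnorm (prod_ip ipH ipG) (x n.+1 - x n)) ^+ 2)%:E
         < +oo)%E,
      (\sum_(0 <= n <oo) ((ipnorm (prod_ip ipH ipG) (xh n - x n)) ^+ 2)%:E
         < +oo)%E &
      ((forall (y : (H * G)%type) (k : nat -> nat),
          (forall n, (k n < k n.+1)%N) ->
          weak_cvg (prod_ip ipH ipG) (fun n => x (k n)) y -> Z y) ->
       strong_cvg (prod_ip ipH ipG) x (metric_proj (prod_ip ipH ipG) Z (x 0%N)))].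
Proof.
have hip : is_inner_product (prod_ip ipH ipG) := prod_inner ipH ipG hH hG.
have hcomp := prod_complete ipH ipG hH hG.
set ip := prod_ip ipH ipG in hip hcomp def_x C_H Hn_cl C_cl Z_cl def_xh *.
set x0 := x 0%N in def_x *.
pose D n := halfsp ip x0 (x n) `&` C n.
have ZH : forall n, Z `<=` halfsp ip x0 (x n).
  elim=> [|n IH] z Zz.
    by rewrite /halfsp /= /x0 subrr (ip0r _ hip).
  have ZD : Z `<=` D n by move=> w Zw; split; [exact: IH | exact: Z_C].
  have D0 : D n !=set0 by case: Z_ne => w Zw; exists w; exact: ZD.
  have Dcl : ip_closed ip (D n).
    by apply: closedI; [apply: (halfsp_closed _ hip) | apply: C_cl].
  have Dcv : cvx (D n).
    by apply: cvxI; [apply: (halfsp_cvx _ hip) | apply: cvx_of_convex; apply: C_cv].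
  have [_ [VI _]] := mproj_spec _ hip hcomp (D n) x0 D0 Dcl Dcv.
  rewrite /halfsp /= def_x (ipC _ hip); apply: VI; exact: ZD.
have ZD n : Z `<=` D n by move=> w Zw; split; [exact: ZH | exact: Z_C].
have D0 n : D n !=set0 by case: Z_ne => w Zw; exists w; exact: ZD.
have Dcl n : ip_closed ip (D n).
  by apply: closedI; [apply: (halfsp_closed _ hip) | apply: C_cl].
have Dcv n : cvx (D n).
  by apply: cvxI; [apply: (halfsp_cvx _ hip) | apply: cvx_of_convex; apply: C_cv].
have xD n : D n (x n.+1) /\
    (forall z, D n z -> ip (x0 - x n.+1) (z - x n.+1) <= 0) /\
    (forall z, D n z -> ip (x0 - x n.+1) (x0 - x n.+1) <= ip (x0 - z) (x0 - z)).
  rewrite def_x; exact: (mproj_spec _ hip hcomp (D n) x0 (D0 n) (Dcl n) (Dcv n)).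
have K n : ip (x n.+1 - x n) (x n.+1 - x n) + ip (x n - x0) (x n - x0)
    <= ip (x n.+1 - x0) (x n.+1 - x0).
  have [[hx _] _] := xD n; rewrite /halfsp /= in hx.
  have -> : x n.+1 - x0 = (x n.+1 - x n) - (x0 - x n) by rewrite opprB addrA subrK.
  rewrite [X in _ <= X](nsqB _ hip) (nsqC _ hip (x n)); lra.
have Bd : forall z, Z z -> forall n, ip (x n - x0) (x n - x0) <= ip (z - x0) (z - x0).
  move=> z Zz [|n].
    by rewrite /x0 subrr (ip0l _ hip) (nsq_ge0 _ hip).
  have := (xD n).2.2 z (ZD n z Zz).
  by rewrite (nsqC _ hip x0 (x n.+1)) (nsqC _ hip x0 z).
have [z0 Zz0] := Z_ne.
have psum N : \sum_(0 <= i < N) ipnorm ip (x i.+1 - x i) ^+ 2 <= ip (x N - x0) (x N - x0).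
  elim: N => [|N IH]; first by rewrite big_geq // (nsq_ge0 _ hip).
  rewrite big_nat_recr //= (ipnorm_sq _ hip); have := K N; lra.
have T n : ipnorm ip (xh n - x n) ^+ 2 <= ipnorm ip (x n.+1 - x n) ^+ 2.
  rewrite !(ipnorm_sq _ hip).
  have hc := C_H n _ (xD n).1.2; rewrite /halfsp /= in hc.
  rewrite (nsqC _ hip (xh n)).
  have -> : x n.+1 - x n = (x n.+1 - xh n) - (x n - xh n) by rewrite opprB addrA subrK.
  rewrite [X in _ <= X](nsqB _ hip); have := nsq_ge0 _ hip (x n.+1 - xh n); lra.
split.
- by move=> n z Zz; split; [exact: ZH | exact: Z_C].
- move=> n; rewrite /ipnorm ler_sqrt ?(nsq_ge0 _ hip) //.
  have := K n; have := nsq_ge0 _ hip (x n.+1 - x n); lra.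
- apply: (series_fin _ (ip (z0 - x0) (z0 - x0))).
    by move=> n; rewrite exprn_ge0 // ipnorm_ge0.
  by move=> N; apply: le_trans (psum N) (Bd z0 Zz0 N).
- apply: (series_fin _ (ip (z0 - x0) (z0 - x0))).
    by move=> n; rewrite exprn_ge0 // ipnorm_ge0.
  move=> N; apply: le_trans (le_trans (psum N) (Bd z0 Zz0 N)).
  by apply: ler_sum => i _; exact: T.
move=> hyp.
have Zcv : cvx Z := cvx_of_convex _ Z_cv.
have [Zp [VIp _]] := mproj_spec _ hip hcomp Z x0 Z_ne Z_cl Zcv.
set p := metric_proj ip Z x0 in Zp VIp *.
apply/strong_cvgP; apply: contrapT => hn.
have [e he] := (existsNP _).2 hn.
have e0 : 0 < e by apply: contrapT => h; apply: he => /h [].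
have hfar : forall N, exists n, (N <= n)%N /\ e <= ip (x n - p) (x n - p).
  move=> N; apply: contrapT => hN; apply: he => _; exists N => n hnN.
  rewrite ltNge; apply/negP => hle; apply: hN; exists n; split => //.
have [g hg] := choice hfar.
pose k := fix k n := match n with 0 => g 0%N | n'.+1 => g (k n').+1 end.
have kS n : k n.+1 = g (k n).+1 by [].
have kinc : forall n, (k n < k n.+1)%N by move=> n; rewrite kS; exact: (hg _).1.
have kfar : forall n, e <= ip (x (k n) - p) (x (k n) - p).
  by case=> [|n]; [exact: (hg _).2 | rewrite kS; exact: (hg _).2].
have xB : forall n, ip (x n) (x n) <= 2 * ip (p - x0) (p - x0) + 2 * ip x0 x0.
  move=> n; have -> : x n = (x n - x0) + x0 by rewrite subrK.
  rewrite [X in X <= _](nsqD _ hip); have := young _ hip (x n - x0) x0 1 ltr01.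
  have := Bd p Zp n; rewrite invr1 !mul1r; have := nsq_ge0 _ hip x0.
  have := nsq_ge0 _ hip (x n - x0); move=> ? ? ? ?; lra.
have [psi [pinc [y wy]]] := weak_compact _ hip hcomp (fun n => x (k n)) _ (fun n => xB (k n)).
have Zy : Z y.
  apply: (hyp y (fun n => k (psi n))) => // n; exact: incr_mono kinc _ _ (pinc n).
have vy := VIp y Zy.
have := wy (x0 - p); move=> /ecvgP hw.
have e2 : 0 < e / 2 by rewrite divr_gt0.
have [N hN] := hw _ e2; have hN0 := hN N (leqnn N).
have far := kfar (psi N).
have bd := Bd p Zp (k (psi N)).
set wN := x (k (psi N)) in hN0 far bd.
rewrite (_ : wN - p = (wN - x0) + (x0 - p)) in far; last by rewrite addrA subrK.
rewrite (nsqD _ hip) in far.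
have q1 : ip (wN - x0) (x0 - p) = ip wN (x0 - p) - ip x0 (x0 - p) := ipBl _ hip _ _ _.
have q2 : ip (x0 - p) (x0 - p) = ip x0 (x0 - p) - ip p (x0 - p) := ipBl _ hip _ _ _.
have q3 : ip (x0 - p) (y - p) = ip y (x0 - p) - ip p (x0 - p).
  by rewrite (ipC _ hip) (ipBl _ hip).
rewrite (nsqC _ hip p x0) in bd.
rewrite ltr_norml in hN0; case/andP: hN0 => hN1 hN2.
lra.
Qed.
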